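(* Let $\gamma:[0,1]\to\mathbb{C}$ be a Jordan arc (continuous and injective) and $t_0\in(0,1)$. Assume that for every open interval $I\subset(0,1)$ with $t_0\in I$ and every function $f:I\to\mathbb{C}$ the following two conditions are equivalent: (1) there are a power series $\sum_{n\ge0}a_n(t-t_0)^n$ with radius of convergence $r>0$ and $0<\delta\le r$ such that $f(t)=\sum_{n\ge0}a_n(t-t_0)^n$ for $t\in(t_0-\delta,t_0+\delta)$; (2) there are a power series $\sum_{n\ge0}b_n(z-\gamma(t_0))^n$ with radius of convergence $s>0$ and $0<\epsilon\le s$ such that $f(t)=\sum_{n\ge0}b_n(\gamma(t)-\gamma(t_0))^n$ for $t\in(t_0-\epsilon,t_0+\epsilon)$. Then $\gamma$ is locally analytic at $t_0$: there exist $\delta>0$ with $(t_0-\delta,t_0+\delta)\subset[0,1]$, an open set $V\subset\mathbb{C}$ containing $(t_0-\delta,t_0+\delta)$, and an injective holomorphic (conformal) map $\phi:V\to\mathbb{C}$ with $\phi=\gamma$ on $(t_0-\delta,t_0+\delta)$. *)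

(* Defs.v *)
From Stdlib Require Import Reals.
Open Scope R_scope.

Definition Cx : Type := (R * R)%type.
Definition RtoC (x : R) : Cx := (x, 0).
Definition Cadd (z w : Cx) : Cx := (fst z + fst w, snd z + snd w).
Definition Copp (z : Cx) : Cx := (- fst z, - snd z).
Definition Csub (z w : Cx) : Cx := Cadd z (Copp w).
Definition Cmul (z w : Cx) : Cx :=
  (fst z * fst w - snd z * snd w, fst z * snd w + snd z * fst w).
Fixpoint Cpow (z : Cx) (n : nat) : Cx :=
  match n with O => (1, 0) | S m => Cmul z (Cpow z m) end.
Definition Cnorm (z : Cx) : R := sqrt (fst z * fst z + snd z * snd z).

Fixpoint Cpartial (u : nat -> Cx) (n : nat) : Cx :=
  match n with O => u O | S m => Cadd (Cpartial u m) (u (S m)) end.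

Definition Cseries_cv (u : nat -> Cx) (l : Cx) : Prop :=
  forall eps, eps > 0 -> exists N : nat, forall n, (n >= N)%nat ->
    Cnorm (Csub (Cpartial u n) l) < eps.

(* The radius of convergence of sum_n a_n w^n (= sup of |w| at which the
   series converges) is >= r : the series converges at every w with |w| < r. *)
Definition radius_ge (a : nat -> Cx) (r : R) : Prop :=
  forall w : Cx, Cnorm w < r -> exists l, Cseries_cv (fun n => Cmul (a n) (Cpow w n)) l.

Definition jordan_arc (g : R -> Cx) : Prop :=
  (forall t, 0 <= t <= 1 -> forall eps, eps > 0 -> exists d, d > 0 /\
     forall s, 0 <= s <= 1 -> Rabs (s - t) < d -> Cnorm (Csub (g s) (g t)) < eps) /\
  (forall s t, 0 <= s <= 1 -> 0 <= t <= 1 -> g s = g t -> s = t).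

Definition cond1 (a b t0 : R) (f : R -> Cx) : Prop :=
  exists (c : nat -> Cx) (r d : R), r > 0 /\ radius_ge c r /\ 0 < d <= r /\
    (forall t, t0 - d < t < t0 + d -> a < t < b) /\
    (forall t, t0 - d < t < t0 + d ->
       Cseries_cv (fun n => Cmul (c n) (Cpow (RtoC (t - t0)) n)) (f t)).

Definition cond2 (g : R -> Cx) (a b t0 : R) (f : R -> Cx) : Prop :=
  exists (c : nat -> Cx) (s e : R), s > 0 /\ radius_ge c s /\ 0 < e <= s /\
    (forall t, t0 - e < t < t0 + e -> a < t < b) /\
    (forall t, t0 - e < t < t0 + e ->
       Cseries_cv (fun n => Cmul (c n) (Cpow (Csub (g t) (g t0)) n)) (f t)).

Definition Copen (V : Cx -> Prop) : Prop :=
  forall z, V z -> exists r, r > 0 /\ forall w, Cnorm (Csub w z) < r -> V w.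

Definition holomorphic_on (V : Cx -> Prop) (phi : Cx -> Cx) : Prop :=
  forall z, V z -> exists L : Cx, forall eps, eps > 0 -> exists d, d > 0 /\
    forall w, V w -> Cnorm (Csub w z) < d ->
      Cnorm (Csub (Csub (phi w) (phi z)) (Cmul L (Csub w z))) <= eps * Cnorm (Csub w z).

Definition injective_on (V : Cx -> Prop) (phi : Cx -> Cx) : Prop :=
  forall z w, V z -> V w -> phi z = phi w -> z = w.

(* Main.v *)
From Stdlib Require Import Reals Lra Lia ClassicalEpsilon.
From Coquelicot Require Import Coquelicot.
Require Import Defs.
Open Scope R_scope.

Ltac ceq := apply injective_projections; unfold Csub, Cadd, Copp, Cmul, RtoC; simpl; ring.

Lemma Cnorm_Cmod z : Cnorm z = Cmod z.
Proof. unfold Cnorm, Cmod. f_equal. ring. Qed.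

Lemma Cnorm_ge0 z : 0 <= Cnorm z.
Proof. rewrite Cnorm_Cmod. apply Cmod_ge_0. Qed.

Lemma Cnorm_tri z w : Cnorm (Cadd z w) <= Cnorm z + Cnorm w.
Proof. rewrite !Cnorm_Cmod. apply Cmod_triangle. Qed.

Lemma Cnorm_mul z w : Cnorm (Cmul z w) = Cnorm z * Cnorm w.
Proof. rewrite !Cnorm_Cmod. apply Cmod_mult. Qed.

Lemma Cnorm_one : Cnorm (1,0) = 1.
Proof. unfold Cnorm; simpl. replace (1*1+0*0) with 1 by ring. apply sqrt_1. Qed.

Lemma Cnorm_pow z n : Cnorm (Cpow z n) = Cnorm z ^ n.
Proof. induction n; simpl. apply Cnorm_one. rewrite Cnorm_mul, IHn. reflexivity. Qed.

Lemma Cnorm_RtoC x : Cnorm (RtoC x) = Rabs x.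
Proof. unfold Cnorm, RtoC; simpl. replace (x*x+0*0) with (Rsqr x) by (unfold Rsqr; ring). apply sqrt_Rsqr_abs. Qed.

Lemma Cnorm_opp z : Cnorm (Copp z) = Cnorm z.
Proof. unfold Cnorm, Copp; simpl. f_equal. ring. Qed.

Lemma Cnorm_sub_sym z w : Cnorm (Csub z w) = Cnorm (Csub w z).
Proof. replace (Csub z w) with (Copp (Csub w z)) by ceq. apply Cnorm_opp. Qed.

Lemma Cnorm_sub_tri z w u : Cnorm (Csub z w) <= Cnorm (Csub z u) + Cnorm (Csub u w).
Proof. replace (Csub z w) with (Cadd (Csub z u) (Csub u w)) by ceq. apply Cnorm_tri. Qed.

Lemma Cnorm_subadd z w : Cnorm (Csub z w) <= Cnorm z + Cnorm w.
Proof. unfold Csub. rewrite <- (Cnorm_opp w). apply Cnorm_tri. Qed.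

Lemma Cnorm_fst z : Rabs (fst z) <= Cnorm z.
Proof. rewrite Cnorm_Cmod. pose proof (Rmax_Cmod z). pose proof (Rmax_l (Rabs (fst z)) (Rabs (snd z))). lra. Qed.
Lemma Cnorm_snd z : Rabs (snd z) <= Cnorm z.
Proof. rewrite Cnorm_Cmod. pose proof (Rmax_Cmod z). pose proof (Rmax_r (Rabs (fst z)) (Rabs (snd z))). lra. Qed.
Lemma Cnorm_le_sum z : Cnorm z <= 2 * (Rabs (fst z) + Rabs (snd z)).
Proof. rewrite Cnorm_Cmod. pose proof (Cmod_2Rmax z).
  assert (sqrt 2 <= 2). { rewrite <- (sqrt_square 2) at 2 by lra. apply sqrt_le_1_alt. lra. }
  assert (Rmax (Rabs (fst z)) (Rabs (snd z)) <= Rabs (fst z) + Rabs (snd z)).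
  { pose proof (Rabs_pos (fst z)); pose proof (Rabs_pos (snd z)). apply Rmax_lub; lra. }
  assert (0 <= Rmax (Rabs (fst z)) (Rabs (snd z))). { pose proof (Rabs_pos (fst z)). pose proof (Rmax_l (Rabs (fst z)) (Rabs (snd z))). lra. }
  assert (0 <= sqrt 2) by apply sqrt_pos. nra. Qed.
Lemma Cnorm_eq0 z : Cnorm z = 0 -> z = (0,0).
Proof. rewrite Cnorm_Cmod. intro H. apply Cmod_eq_0 in H. exact H. Qed.
Lemma Cnorm_zero : Cnorm (0,0) = 0.
Proof. unfold Cnorm; simpl. replace (0*0+0*0) with 0 by ring. apply sqrt_0. Qed.


Lemma Cpartial_ext u v n : (forall k, u k = v k) -> Cpartial u n = Cpartial v n.
Proof. intro H. induction n; simpl; rewrite ?IHn, ?H; reflexivity. Qed.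

Lemma Cseries_ext u v l : (forall k, u k = v k) -> Cseries_cv u l -> Cseries_cv v l.
Proof. intros H Hc eps He. destruct (Hc eps He) as [N HN]. exists N. intros n Hn.
  rewrite <- (Cpartial_ext u v n H). auto. Qed.

Lemma Cseries_unique u l m : Cseries_cv u l -> Cseries_cv u m -> l = m.
Proof. intros H1 H2.
  assert (Cnorm (Csub l m) = 0).
  { apply Rle_antisym; [|apply Cnorm_ge0].
    apply Rnot_lt_le. intro Hp.
    destruct (H1 (Cnorm (Csub l m) / 2)) as [N1 HN1]; [lra|].
    destruct (H2 (Cnorm (Csub l m) / 2)) as [N2 HN2]; [lra|].
    specialize (HN1 (max N1 N2)%nat ltac:(lia)). specialize (HN2 (max N1 N2)%nat ltac:(lia)).
    pose proof (Cnorm_sub_tri l m (Cpartial u (max N1 N2))).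
    rewrite Cnorm_sub_sym in HN1. lra. }
  apply Cnorm_eq0 in H. replace l with (Cadd (Csub l m) m) by ceq. rewrite H. ceq. Qed.

Lemma Cpartial_sub u v n : Cpartial (fun k => Csub (u k) (v k)) n = Csub (Cpartial u n) (Cpartial v n).
Proof. induction n; simpl. reflexivity. rewrite IHn. ceq. Qed.

Lemma Cseries_sub u v l m : Cseries_cv u l -> Cseries_cv v m ->
  Cseries_cv (fun n => Csub (u n) (v n)) (Csub l m).
Proof. intros H1 H2 eps He.
  destruct (H1 (eps/2)) as [N1 HN1]; [lra|]. destruct (H2 (eps/2)) as [N2 HN2]; [lra|].
  exists (max N1 N2). intros n Hn. rewrite Cpartial_sub.
  specialize (HN1 n ltac:(lia)). specialize (HN2 n ltac:(lia)).
  replace (Csub (Csub (Cpartial u n) (Cpartial v n)) (Csub l m)) with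
    (Csub (Csub (Cpartial u n) l) (Csub (Cpartial v n) m)) by ceq.
  pose proof (Cnorm_subadd (Csub (Cpartial u n) l) (Csub (Cpartial v n) m)). lra. Qed.

Lemma Cpartial_mulr u c n : Cpartial (fun k => Cmul (u k) c) n = Cmul (Cpartial u n) c.
Proof. induction n; simpl. reflexivity. rewrite IHn. ceq. Qed.

Lemma Cseries_mulr u l c : Cseries_cv u l -> Cseries_cv (fun n => Cmul (u n) c) (Cmul l c).
Proof. intros H eps He. pose proof (Cnorm_ge0 c).
  destruct (H (eps / (Cnorm c + 1))) as [N HN]. { apply Rdiv_lt_0_compat; lra. }
  exists N. intros n Hn. rewrite Cpartial_mulr.
  replace (Csub (Cmul (Cpartial u n) c) (Cmul l c)) with (Cmul (Csub (Cpartial u n) l) c) by ceq.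
  rewrite Cnorm_mul. specialize (HN n Hn).
  apply Rle_lt_trans with (eps / (Cnorm c + 1) * Cnorm c).
  apply Rmult_le_compat_r; lra.
  apply Rlt_le_trans with (eps / (Cnorm c + 1) * (Cnorm c + 1)).
  apply Rmult_lt_compat_l. apply Rdiv_lt_0_compat; lra. lra.
  right. field. lra. Qed.

Lemma Cpartial_single k X n :
  Cpartial (fun j => if Nat.eqb j k then X else (0,0)) n = if Nat.leb k n then X else (0,0).
Proof. induction n; cbn [Cpartial].
  - destruct k; simpl; reflexivity.
  - rewrite IHn. destruct (Nat.eqb_spec (S n) k); destruct (Nat.leb_spec k n); destruct (Nat.leb_spec k (S n)); try lia; ceq.
Qed.

Lemma Cseries_single k X : Cseries_cv (fun j => if Nat.eqb j k then X else (0,0)) X.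
Proof. intros eps He. exists k. intros n Hn. rewrite Cpartial_single.
  destruct (Nat.leb_spec k n); try lia.
  replace (Csub X X) with ((0,0):Cx) by ceq. rewrite Cnorm_zero. lra. Qed.

Lemma Cseries_zero_tail u l : Cseries_cv u l -> (forall n, Cnorm (u (S n)) = 0) -> l = u O.
Proof. intros H Hz. apply (Cseries_unique u). exact H.
  apply Cseries_ext with (fun j => if Nat.eqb j 0 then u O else (0,0)).
  intros [|k]; simpl. reflexivity. symmetry. apply Cnorm_eq0. apply Hz.
  apply Cseries_single. Qed.

Lemma geom_sum K n : sum_f_R0 (fun k => K * (/2)^k) n = 2*K - K * (/2)^n.
Proof. induction n; simpl. field. rewrite IHn. field. Qed.

Lemma Cpartial_bound u K n : (forall k, Cnorm (u k) <= K * (/2)^k) ->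
  Cnorm (Cpartial u n) <= 2*K - K*(/2)^n.
Proof. intro H. induction n; simpl.
  - specialize (H O). simpl in H. lra.
  - eapply Rle_trans. apply Cnorm_tri. specialize (H (S n)). simpl in H. lra. Qed.

Lemma Cseries_bound u l K : Cseries_cv u l -> (forall k, Cnorm (u k) <= K * (/2)^k) ->
  Cnorm l <= 2*K.
Proof. intros H Hb. assert (HK: 0 <= K). { specialize (Hb O). simpl in Hb. pose proof (Cnorm_ge0 (u O)). lra. }
  apply Rnot_lt_le. intro Hl.
  destruct (H (Cnorm l - 2*K)) as [N HN]; [lra|]. specialize (HN N (le_n N)).
  pose proof (Cpartial_bound u K N Hb).
  assert (0 <= K * (/2)^N). { apply Rmult_le_pos; [lra|]. apply pow_le. lra. }
  pose proof (Cnorm_sub_tri l (0,0) (Cpartial u N)).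
  replace (Csub l (0,0)) with l in H2 by ceq.
  replace (Csub (Cpartial u N) (0,0)) with (Cpartial u N) in H2 by ceq.
  rewrite Cnorm_sub_sym in H2. lra. Qed.

Lemma fst_partial u n : fst (Cpartial u n) = sum_f_R0 (fun k => fst (u k)) n.
Proof. induction n; simpl; [reflexivity| rewrite IHn; reflexivity]. Qed.
Lemma snd_partial u n : snd (Cpartial u n) = sum_f_R0 (fun k => snd (u k)) n.
Proof. induction n; simpl; [reflexivity| rewrite IHn; reflexivity]. Qed.

Lemma real_series_exists (a : nat -> R) K : (forall n, Rabs (a n) <= K * (/2)^n) ->
  exists l, infinite_sum a l.
Proof. intro H.
  assert (ex_series a).
  { apply (@ex_series_le R_AbsRing R_CompleteNormedModule) with (fun n => K * (/2)^n).
    intro n. apply H.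
    apply (ex_series_scal_l (K:=R_AbsRing) (V:=R_NormedModule) K (fun n => (/2)^n)). apply ex_series_geom. rewrite Rabs_pos_eq; lra. }
  destruct H0 as [l Hl]. exists l. apply is_series_Reals. exact Hl. Qed.

Lemma Cseries_exists u K : (forall n, Cnorm (u n) <= K * (/2)^n) -> exists l, Cseries_cv u l.
Proof. intro H.
  destruct (real_series_exists (fun n => fst (u n)) K) as [l1 H1].
  { intro n. eapply Rle_trans. apply Cnorm_fst. apply H. }
  destruct (real_series_exists (fun n => snd (u n)) K) as [l2 H2].
  { intro n. eapply Rle_trans. apply Cnorm_snd. apply H. }
  exists (l1, l2). intros eps He.
  destruct (H1 (eps/4)) as [N1 HN1]; [lra|]. destruct (H2 (eps/4)) as [N2 HN2]; [lra|].
  exists (max N1 N2). intros n Hn.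
  specialize (HN1 n ltac:(lia)). specialize (HN2 n ltac:(lia)). unfold Rdist in *.
  eapply Rle_lt_trans. apply Cnorm_le_sum.
  unfold Csub, Cadd, Copp. simpl. rewrite fst_partial, snd_partial.
  unfold Rminus in HN1, HN2. lra. Qed.

Lemma abs_le_sum (v : nat -> R) n N : (forall k, 0 <= v k) -> (n <= N)%nat -> v n <= sum_f_R0 v N.
Proof. intros Hp Hn. induction N.
  - assert (n = O) by lia. subst. simpl. lra.
  - destruct (Nat.eq_dec n (S N)).
    + subst. simpl. pose proof (cond_pos_sum v N Hp). lra.
    + simpl. pose proof (Hp (S N)). assert (Hnn: (n <= N)%nat) by lia. specialize (IHN Hnn). lra. Qed.

Lemma terms_bounded c r p : radius_ge c r -> 0 < p < r ->
  exists M, M > 0 /\ forall n, Cnorm (c n) * p^n <= M.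
Proof. intros Hr Hp.
  destruct (Hr (RtoC p)) as [l Hl]. { rewrite Cnorm_RtoC, Rabs_pos_eq; lra. }
  set (u := fun n => Cmul (c n) (Cpow (RtoC p) n)) in *.
  assert (Hu : forall n, Cnorm (u n) = Cnorm (c n) * p^n).
  { intro n. unfold u. rewrite Cnorm_mul, Cnorm_pow, Cnorm_RtoC, Rabs_pos_eq; lra. }
  destruct (Hl 1) as [N HN]; [lra|].
  set (Sm := sum_f_R0 (fun k => Cnorm (u k)) N).
  assert (0 <= Sm) by (apply cond_pos_sum; intro; apply Cnorm_ge0).
  exists (Sm + 3). split; [lra|]. intro n. rewrite <- Hu.
  destruct (Compare_dec.le_lt_dec n N).
  - pose proof (abs_le_sum (fun k => Cnorm (u k)) n N (fun k => Cnorm_ge0 _) l0). simpl in H0. fold Sm in H0. lra.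
  - destruct n as [|m]; [lia|].
    assert (u (S m) = Csub (Cpartial u (S m)) (Cpartial u m)) by (simpl; ceq).
    rewrite H0. pose proof (HN (S m) ltac:(lia)). pose proof (HN m ltac:(lia)).
    pose proof (Cnorm_sub_tri (Cpartial u (S m)) (Cpartial u m) l).
    rewrite (Cnorm_sub_sym l) in H3. lra. Qed.

Lemma D_bound w z p n : Cnorm w <= p -> Cnorm z <= p -> 0 <= p ->
  p * Cnorm (Csub (Cpow w n) (Cpow z n)) <= INR n * p^n * Cnorm (Csub w z).
Proof. intros Hw Hz Hp. induction n.
  - simpl. replace (Csub (1,0) (1,0)) with ((0,0):Cx) by ceq. rewrite Cnorm_zero. 
    pose proof (Cnorm_ge0 (Csub w z)). nra.
  - replace (Csub (Cpow w (S n)) (Cpow z (S n))) with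
      (Cadd (Cmul w (Csub (Cpow w n) (Cpow z n))) (Cmul (Cpow z n) (Csub w z))) by (simpl; ceq).
    pose proof (Cnorm_tri (Cmul w (Csub (Cpow w n) (Cpow z n))) (Cmul (Cpow z n) (Csub w z))).
    rewrite !Cnorm_mul, Cnorm_pow in H.
    pose proof (Cnorm_ge0 (Csub (Cpow w n) (Cpow z n))). pose proof (Cnorm_ge0 (Csub w z)).
    pose proof (Cnorm_ge0 w). pose proof (Cnorm_ge0 z).
    assert (Cnorm z ^ n <= p ^ n) by (apply pow_incr; lra).
    assert (0 <= p ^ n) by (apply pow_le; lra).
    rewrite S_INR. simpl.
    assert (p * (Cnorm w * Cnorm (Csub (Cpow w n) (Cpow z n))) <= p * (INR n * p ^ n * Cnorm (Csub w z))).
    { apply Rmult_le_compat_l; [lra|]. eapply Rle_trans. apply Rmult_le_compat_r; [lra|]. exact Hw. exact IHn. }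
    assert (p * (Cnorm z ^ n * Cnorm (Csub w z)) <= p * (p^n * Cnorm (Csub w z))).
    { apply Rmult_le_compat_l; [lra|]. apply Rmult_le_compat_r; lra. }
    assert (p * Cnorm (Csub (Cpow w (S n)) (Cpow z (S n))) <= p * (Cnorm w * Cnorm (Csub (Cpow w n) (Cpow z n)) + Cnorm z ^ n * Cnorm (Csub w z))).
    { apply Rmult_le_compat_l; [lra|]. replace (Csub (Cpow w (S n)) (Cpow z (S n))) with
      (Cadd (Cmul w (Csub (Cpow w n) (Cpow z n))) (Cmul (Cpow z n) (Csub w z))) by (simpl; ceq). exact H. }
    nra.
Qed.

Definition Eterm w z n := Csub (Csub (Cpow w n) (Cpow z n))
   (Cmul (Cmul (RtoC (INR n)) (Cpow z (pred n))) (Csub w z)).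

Lemma Cnorm_INR n X : Cnorm (Cmul (RtoC (INR n)) X) = INR n * Cnorm X.
Proof. rewrite Cnorm_mul, Cnorm_RtoC, Rabs_pos_eq; [reflexivity| apply pos_INR]. Qed.

Lemma E_bound w z p n : Cnorm w <= p -> Cnorm z <= p -> 0 <= p ->
  p^2 * Cnorm (Eterm w z n) <= INR n * INR n * p^n * Cnorm (Csub w z) ^ 2.
Proof. intros Hw Hz Hp. pose proof (Cnorm_ge0 (Csub w z)) as Hwz.
  pose proof (Cnorm_ge0 w). pose proof (Cnorm_ge0 z).
  induction n.
  - unfold Eterm. simpl. replace (Csub (Csub (1,0) (1,0)) (Cmul (Cmul (RtoC 0) (1, 0)) (Csub w z))) with ((0,0):Cx) by ceq.
    rewrite Cnorm_zero. nra.
  - destruct n as [|m].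
    + unfold Eterm. simpl. replace (Csub (Csub (Cmul w (1, 0)) (Cmul z (1, 0))) (Cmul (Cmul (RtoC 1) (1, 0)) (Csub w z))) with ((0,0):Cx) by ceq.
      rewrite Cnorm_zero. assert (0 <= p^2) by nra. nra.
    + assert (Heq : Eterm w z (S (S m)) = Cadd (Cmul w (Eterm w z (S m)))
          (Cmul (Cmul (RtoC (INR (S m))) (Cpow z m)) (Cmul (Csub w z) (Csub w z)))).
      { unfold Eterm. rewrite !S_INR. simpl. ceq. }
      rewrite Heq.
      pose proof (Cnorm_tri (Cmul w (Eterm w z (S m)))
          (Cmul (Cmul (RtoC (INR (S m))) (Cpow z m)) (Cmul (Csub w z) (Csub w z)))) as T.
      rewrite Cnorm_mul, Cnorm_mul, Cnorm_INR, Cnorm_pow, Cnorm_mul in T.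
      pose proof (Cnorm_ge0 (Eterm w z (S m))).
      assert (Cnorm z ^ m <= p ^ m) by (apply pow_incr; lra).
      assert (0 <= p ^ m) by (apply pow_le; lra).
      pose proof (pos_INR (S m)).
      set (A := INR (S m)) in *. set (e := Cnorm (Csub w z)) in *.
      set (E := Cnorm (Eterm w z (S m))) in *.
      replace (INR (S (S m))) with (A + 1) by (unfold A; rewrite (S_INR (S m)); reflexivity).
      assert (H5: p^2 * (Cnorm w * E) <= p * (A * A * p ^ S m * e ^ 2)).
      { replace (p^2 * (Cnorm w * E)) with (Cnorm w * (p^2 * E)) by ring.
        replace (p * (A * A * p ^ S m * e ^ 2)) with (p * (A * A * p ^ S m * e ^ 2)) by ring.
        apply Rmult_le_compat; try nra. }
      assert (H6: p^2 * (A * Cnorm z ^ m * (e * e)) <= A * p ^ S (S m) * e^2).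
      { simpl. assert (0 <= e*e) by nra. 
        assert (A * Cnorm z ^ m * (e*e) <= A * p^m * (e*e)).
        { apply Rmult_le_compat_r; [lra|]. apply Rmult_le_compat_l; lra. }
        nra. }
      assert (p^2 * Cnorm (Cadd (Cmul w (Eterm w z (S m)))
          (Cmul (Cmul (RtoC A) (Cpow z m)) (Cmul (Csub w z) (Csub w z)))) <= 
          p^2 * (Cnorm w * E + A * Cnorm z ^ m * (e * e))).
      { apply Rmult_le_compat_l. nra. exact T. }
      assert (0 <= A * p ^ S (S m) * e^2).
      { apply Rmult_le_pos. apply Rmult_le_pos. lra. apply pow_le; lra. nra. }
      replace (p ^ S (S m)) with (p * p ^ S m) in * by (simpl; ring).
      assert (0 <= p ^ S m) by (apply pow_le; lra).
      assert (0 <= e^2) by nra.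
      assert (0 <= p * p ^ S m * e^2) by (apply Rmult_le_pos; [apply Rmult_le_pos|]; lra).
      assert (0 <= (A+1) * (p * p ^ S m * e^2)) by (apply Rmult_le_pos; lra).
      lra.
Qed.

Lemma INR_le_pow2 n : INR n <= 2^n.
Proof. induction n. simpl; lra. rewrite S_INR. simpl.
  assert (1 <= 2^n) by (apply pow_R1_Rle; lra). lra. Qed.

Lemma n_pow y n : 0 <= y -> INR n * y^n <= (2*y)^n.
Proof. intro. rewrite Rpow_mult_distr. apply Rmult_le_compat_r. apply pow_le; lra. apply INR_le_pow2. Qed.

Lemma n2_pow y n : 0 <= y -> INR n * INR n * y^n <= (4*y)^n.
Proof. intro. replace (4*y) with (2*(2*y)) by ring. rewrite Rpow_mult_distr.
  replace (INR n * INR n * y^n) with (INR n * (INR n * y^n)) by ring.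
  apply Rmult_le_compat. apply pos_INR. apply Rmult_le_pos. apply pos_INR. apply pow_le; lra.
  apply INR_le_pow2. apply n_pow; lra. Qed.

Lemma pow_split x k n : 0 <= x <= /2 -> (k <= n)%nat -> x^n <= 2^k * x^k * (/2)^n.
Proof. intros Hx Hk. replace n with (k + (n - k))%nat by lia. rewrite !pow_add.
  replace (2^k * x^k * ((/2)^k * (/2)^(n-k))) with (x^k * (/2)^(n-k) * ((2 * /2)^k)) by (rewrite Rpow_mult_distr; ring).
  replace (2 * /2) with 1 by field. rewrite pow1.
  rewrite Rmult_1_r. apply Rmult_le_compat_l. apply pow_le; lra. apply pow_incr; lra. Qed.

Lemma term_est (c : nat -> Cx) p M X y k n : Cnorm (c n) * p^n <= M -> 0 < p -> Cnorm X <= p * y ->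
  0 <= y <= /2 -> (k <= n)%nat ->
  Cnorm (Cmul (c n) (Cpow X n)) <= (M * 2^k * y^k) * (/2)^n.
Proof. intros Hc Hp HX Hy Hk. rewrite Cnorm_mul, Cnorm_pow.
  pose proof (Cnorm_ge0 (c n)). pose proof (Cnorm_ge0 X).
  assert (Cnorm X ^ n <= p^n * y^n). { rewrite <- Rpow_mult_distr. apply pow_incr; lra. }
  assert (Cnorm (c n) * Cnorm X ^ n <= M * y^n).
  { eapply Rle_trans. apply Rmult_le_compat_l; [lra| exact H1].
    rewrite <- Rmult_assoc. apply Rmult_le_compat_r. apply pow_le; lra. exact Hc. }
  assert (0 <= M). { eapply Rle_trans; [|exact Hc]. apply Rmult_le_pos; [lra|apply pow_le; lra]. }
  eapply Rle_trans. exact H2. replace (M * 2^k * y^k * (/2)^n) with (M * (2^k * y^k * (/2)^n)) by ring.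
  apply Rmult_le_compat_l; [lra|]. apply pow_split; [lra|exact Hk]. Qed.

Definition c2 (X Y : Cx) (n : nat) : Cx := match n with O => X | 1%nat => Y | _ => (0,0) end.

Lemma c2_cv X Y W : Cseries_cv (fun n => Cmul (c2 X Y n) (Cpow W n)) (Cadd X (Cmul Y W)).
Proof. replace (Cadd X (Cmul Y W)) with (Csub X (Copp (Cmul Y W))) by ceq.
  apply Cseries_ext with (fun n => Csub (if Nat.eqb n 0 then X else (0,0)) (if Nat.eqb n 1 then Copp (Cmul Y W) else (0,0))).
  intros [|[|n]]; simpl; ceq.
  apply Cseries_sub; apply Cseries_single. Qed.

Lemma c2_radius X Y r : radius_ge (c2 X Y) r.
Proof. intros w _. eexists. apply c2_cv. Qed.

Lemma Cseries_minus_const u l X : Cseries_cv u l ->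
  Cseries_cv (fun n => Csub (u n) (if Nat.eqb n 0 then X else (0,0))) (Csub l X).
Proof. intro H. apply Cseries_sub. exact H. apply Cseries_single. Qed.
Lemma a1_nonzero (gamma : R -> Cx) t0 a r d b s e :
  r > 0 -> radius_ge a r -> 0 < d ->
  (forall t, t0 - d < t < t0 + d -> Cseries_cv (fun n => Cmul (a n) (Cpow (RtoC (t - t0)) n)) (gamma t)) ->
  s > 0 -> radius_ge b s -> 0 < e ->
  (forall t, t0 - e < t < t0 + e -> Cseries_cv (fun n => Cmul (b n) (Cpow (Csub (gamma t) (gamma t0)) n)) (RtoC t)) ->
  Cnorm (a 1%nat) > 0.
Proof. intros Hr Ha Hd Hga Hs Hb He Hgb.
  set (p := r/2). destruct (terms_bounded a r p Ha) as [M [HM HaM]]. unfold p; lra.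
  set (sg := s/2). destruct (terms_bounded b s sg Hb) as [M' [HM' HbM]]. unfold sg; lra.
  assert (Hp : 0 < p) by (unfold p; lra). assert (Hsg : 0 < sg) by (unfold sg; lra).
  assert (HA0 : gamma t0 = Cmul (a O) (1,0)).
  { pose proof (Cseries_zero_tail _ _ (Hga t0 ltac:(lra))) as Z. rewrite Z. reflexivity.
    intro n. rewrite Cnorm_mul, Cnorm_pow, Cnorm_RtoC. replace (t0 - t0) with 0 by ring.
    rewrite Rabs_R0. simpl. ring. }
  assert (HB0 : RtoC t0 = Cmul (b O) (1,0)).
  { pose proof (Cseries_zero_tail _ _ (Hgb t0 ltac:(lra))) as Z. rewrite Z. reflexivity.
    intro n. rewrite Cnorm_mul, Cnorm_pow. replace (Csub (gamma t0) (gamma t0)) with ((0,0):Cx) by ceq.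
    rewrite Cnorm_zero. simpl. ring. }
  destruct (Rlt_or_le 0 (Cnorm (a 1%nat))) as [|H1]; [lra|].
  assert (H1' : Cnorm (a 1%nat) = 0) by (pose proof (Cnorm_ge0 (a 1%nat)); lra).
  exfalso.
  set (h := Rmin (Rmin (Rmin (d/2) (e/2)) (p/2)) (Rmin (sg*p/(32*M)) (sg*p^2/(256*M*M')))).
  assert (Hh0 : 0 < h).
  { assert (0 < p^2) by (apply pow_lt; lra). assert (0 < M*M') by nra.
    unfold h. repeat apply Rmin_glb_lt; try lra; apply Rdiv_lt_0_compat; nra. }
  assert (Hhd : h <= d/2) by (unfold h; eapply Rle_trans; [apply Rmin_l|]; eapply Rle_trans; [apply Rmin_l|]; apply Rmin_l).
  assert (Hhe : h <= e/2) by (unfold h; eapply Rle_trans; [apply Rmin_l|]; eapply Rle_trans; [apply Rmin_l|]; apply Rmin_r).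
  assert (Hhp : h <= p/2) by (unfold h; eapply Rle_trans; [apply Rmin_l|]; apply Rmin_r).
  assert (Hh4 : h <= sg*p/(32*M)) by (unfold h; eapply Rle_trans; [apply Rmin_r|]; apply Rmin_l).
  assert (Hh5 : h <= sg*p^2/(256*M*M')) by (unfold h; eapply Rle_trans; [apply Rmin_r|]; apply Rmin_r).
  clearbody h.
  set (y := h / p).
  assert (Hy : 0 <= y <= /2). { unfold y. split. apply Rlt_le, Rdiv_lt_0_compat; lra.
    apply Rmult_le_reg_r with p; [lra|]. field_simplify; lra. }
  assert (Hyp : h = p * y) by (unfold y; field; lra).
  set (W := Csub (gamma (t0 + h)) (gamma t0)).
  assert (HW : Cnorm W <= 2 * (M * 2^2 * y^2)).
  { pose proof (Cseries_minus_const _ _ (Cmul (a O) (1,0)) (Hga (t0 + h) ltac:(lra))) as S1.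
    replace (Csub (gamma (t0 + h)) (Cmul (a O) (1,0))) with W in S1 by (unfold W; rewrite HA0; reflexivity).
    apply (Cseries_bound _ _ _ S1).
    replace (t0 + h - t0) with h by ring.
    intros [|[|n]].
    - simpl. replace (Csub (Cmul (a 0%nat) (1, 0)) (Cmul (a 0%nat) (1, 0))) with ((0,0):Cx) by ceq.
      rewrite Cnorm_zero. simpl. nra.
    - simpl. replace (Csub (Cmul (a 1%nat) (Cmul (RtoC h) (1, 0))) (0, 0)) with (Cmul (a 1%nat) (Cmul (RtoC h) (1, 0))) by ceq.
      rewrite Cnorm_mul, H1'. assert (0 <= y^2) by nra. nra.
    - cbv beta. replace (if Nat.eqb (S (S n)) 0 then Cmul (a 0%nat) (1, 0) else (0, 0)) with ((0,0):Cx) by reflexivity.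
      replace (Csub (Cmul (a (S (S n))) (Cpow (RtoC h) (S (S n)))) (0, 0)) with (Cmul (a (S (S n))) (Cpow (RtoC h) (S (S n)))) by ceq.
      apply term_est with p; auto. rewrite Cnorm_RtoC, Rabs_pos_eq; lra. lia. }
  set (x := Cnorm W / sg).
  assert (HWx : Cnorm W = sg * x) by (unfold x; field; lra).
  assert (Hx : 0 <= x <= /2).
  { split. unfold x. apply Rmult_le_pos. apply Cnorm_ge0. apply Rlt_le, Rinv_0_lt_compat; lra.
    assert (Cnorm W <= sg / 2).
    { eapply Rle_trans. exact HW. 
      assert (8 * M * y^2 <= 8 * M * y * /2).
      { assert (0 <= y*(/2 - y)) by (apply Rmult_le_pos; lra).
        assert (0 <= M * (y*(/2 - y))) by (apply Rmult_le_pos; lra). simpl. nra. }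
      assert (4 * M * y <= sg/2).
      { unfold y. apply Rmult_le_reg_r with (32*M*p/(sg)). apply Rdiv_lt_0_compat; nra.
        apply Rmult_le_reg_r with (sg). lra.
        field_simplify; try lra. 
        assert (h * (32*M) <= sg*p). { apply Rmult_le_reg_r with (/(32*M)). apply Rinv_0_lt_compat; lra.
          replace (h * (32 * M) * / (32 * M)) with h by (field; lra). exact Hh4. }
        nra. }
      simpl in *. nra. }
    apply Rmult_le_reg_r with sg; [lra|]. rewrite Rmult_comm, <- HWx. lra. }
  assert (Hhb : h <= 2 * (M' * 2^1 * x^1)).
  { pose proof (Cseries_minus_const _ _ (Cmul (b O) (1,0)) (Hgb (t0 + h) ltac:(lra))) as S2.
    rewrite <- HB0 in S2. pose proof (Cseries_bound _ _ (M' * 2^1 * x^1) S2) as B.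
    replace (Csub (RtoC (t0 + h)) (RtoC t0)) with (RtoC h) in B by ceq.
    rewrite Cnorm_RtoC, Rabs_pos_eq in B by lra. apply B.
    intros [|n].
    - simpl. replace (Csub (Cmul (b 0%nat) (1, 0)) (RtoC t0)) with ((0,0):Cx) by (rewrite HB0; ceq).
      rewrite Cnorm_zero. simpl. nra.
    - cbv beta. replace (if Nat.eqb (S n) 0 then RtoC t0 else (0, 0)) with ((0,0):Cx) by reflexivity.
      replace (Csub (Cmul (b (S n)) (Cpow (Csub (gamma (t0 + h)) (gamma t0)) (S n))) (0, 0))
        with (Cmul (b (S n)) (Cpow W (S n))) by (unfold W; ceq).
      apply term_est with sg; auto. lra. lia. }
  simpl in HW, Hhb.
  assert (h <= 32 * M * M' * y * y / sg).
  { unfold x in Hhb. apply Rle_trans with (4 * M' * (Cnorm W / sg)). lra.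
    unfold Rdiv. rewrite <- Rmult_assoc. apply Rmult_le_compat_r. apply Rlt_le, Rinv_0_lt_compat; lra.
    nra. }
  assert (32 * M * M' * y * y / sg <= h / 8).
  { rewrite Hyp. unfold y. apply Rmult_le_reg_r with (8 * sg * p^2 / (h)). 
    apply Rdiv_lt_0_compat; [|lra]. apply Rmult_lt_0_compat; [lra|]. apply pow_lt; lra.
    field_simplify; try lra.
    assert (h * (256*M*M') <= sg*p^2). { apply Rmult_le_reg_r with (/(256*M*M')). apply Rinv_0_lt_compat; nra.
          replace (h * (256*M*M') * / (256*M*M')) with h by (field; lra). exact Hh5. }
    nra. }
  lra.
Qed.

Lemma coef_est (c : nat -> Cx) p M q n : Cnorm (c n) * p^n <= M -> 0 <= q ->
  Cnorm (c n) * (p*q)^n <= M * q^n.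
Proof. intros H Hq. rewrite Rpow_mult_distr, <- Rmult_assoc. apply Rmult_le_compat_r.
  apply pow_le; lra. exact H. Qed.

Lemma analytic_ext (a : nat -> Cx) r (c0 : Cx) : r > 0 -> radius_ge a r -> Cnorm (a 1%nat) > 0 ->
  exists rho (phi : Cx -> Cx), rho > 0 /\ rho < r /\
   Copen (fun z => Cnorm (Csub z c0) < rho) /\
   holomorphic_on (fun z => Cnorm (Csub z c0) < rho) phi /\
   injective_on (fun z => Cnorm (Csub z c0) < rho) phi /\
   (forall z, Cnorm (Csub z c0) < r -> Cseries_cv (fun n => Cmul (a n) (Cpow (Csub z c0) n)) (phi z)).
Proof. intros Hr Ha HA1.
  set (p := r/2). destruct (terms_bounded a r p Ha) as [M [HM HaM]]. unfold p; lra.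
  assert (Hp : 0 < p) by (unfold p; lra).
  set (A1 := Cnorm (a 1%nat)) in *.
  set (rho := Rmin (p/8) (A1 * p^2 / (64*M))).
  assert (Hrho0 : 0 < rho). { unfold rho. apply Rmin_glb_lt. lra. apply Rdiv_lt_0_compat; [|lra].
    apply Rmult_lt_0_compat; [lra| apply pow_lt; lra]. }
  assert (Hrho1 : rho <= p/8) by apply Rmin_l.
  assert (Hrho2 : rho <= A1 * p^2 / (64*M)) by apply Rmin_r.
  clearbody rho.
  set (q := rho / p).
  assert (Hq : 0 < q <= /8). { unfold q. split. apply Rdiv_lt_0_compat; lra.
    apply Rmult_le_reg_r with p; [lra|]. field_simplify; lra. }
  assert (Hrq : rho = p * q) by (unfold q; field; lra).
  assert (Hcoef : forall n, Cnorm (a n) * rho^n <= M * q^n).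
  { intro n. rewrite Hrq. apply coef_est. apply HaM. lra. }
  set (phi := fun z => epsilon (inhabits ((0,0):Cx)) (fun l => Cseries_cv (fun n => Cmul (a n) (Cpow (Csub z c0) n)) l)).
  assert (Hspec : forall z, Cnorm (Csub z c0) < r -> Cseries_cv (fun n => Cmul (a n) (Cpow (Csub z c0) n)) (phi z)).
  { intros z Hz. unfold phi. apply epsilon_spec. apply Ha. exact Hz. }
  exists rho, phi. split; [lra|]. split; [unfold p in *; lra|]. split; [|split; [|split]].
  -
    intros z Hz. exists (rho - Cnorm (Csub z c0)). split. lra.
    intros w Hw. pose proof (Cnorm_sub_tri w c0 z). lra.
  -
    intros z Hz. set (z' := Csub z c0).
    set (Lt := fun n => Cmul (a n) (Cmul (RtoC (INR n)) (Cpow z' (pred n)))).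
    assert (HLt : forall n, Cnorm (Lt n) <= (M / rho) * (/2)^n).
    { intro n. unfold Lt. rewrite Cnorm_mul, Cnorm_INR. destruct n as [|m].
      - simpl. rewrite Rmult_0_l, Rmult_0_r. apply Rmult_le_pos. apply Rdiv_le_0_compat; lra. lra.
      - simpl pred. rewrite Cnorm_pow.
        apply Rmult_le_reg_l with rho; [lra|].
        pose proof (Cnorm_ge0 z'). pose proof (Cnorm_ge0 (a (S m))). pose proof (pos_INR (S m)).
        assert (Cnorm z' ^ m <= rho ^ m) by (apply pow_incr; unfold z' in *; split; lra).
        assert (rho * (Cnorm (a (S m)) * (INR (S m) * Cnorm z' ^ m)) <= INR (S m) * (Cnorm (a (S m)) * rho ^ (S m))).
        { change (rho ^ S m) with (rho * rho ^ m). replace (INR (S m) * (Cnorm (a (S m)) * (rho * rho ^ m))) with (rho * (Cnorm (a (S m)) * (INR (S m) * rho ^ m))) by ring.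
          apply Rmult_le_compat_l; [lra|]. apply Rmult_le_compat_l; [lra|]. apply Rmult_le_compat_l; lra. }
        assert (INR (S m) * (Cnorm (a (S m)) * rho ^ (S m)) <= M * (INR (S m) * q ^ (S m))).
        { specialize (Hcoef (S m)). replace (M * (INR (S m) * q ^ (S m))) with (INR (S m) * (M * q^(S m))) by ring.
          apply Rmult_le_compat_l; lra. }
        assert (INR (S m) * q ^ (S m) <= (/2)^(S m)).
        { eapply Rle_trans. apply n_pow; lra. apply pow_incr; lra. }
        replace (rho * (M / rho * (/ 2) ^ S m)) with (M * (/2)^(S m)) by (field; lra).
        assert (M * (INR (S m) * q ^ (S m)) <= M * (/2)^(S m)) by (apply Rmult_le_compat_l; lra).
        lra. }
    destruct (Cseries_exists Lt _ HLt) as [L HL].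
    exists L. intros eps Heps.
    exists (eps * rho^2 / (2*M)). split. { apply Rdiv_lt_0_compat; [|lra]. apply Rmult_lt_0_compat; [lra|apply pow_lt; lra]. }
    intros w Hw Hwz. set (w' := Csub w c0).
    assert (Hdd : Csub w' z' = Csub w z) by (unfold w', z'; ceq).
    pose proof (Cseries_sub _ _ _ _ (Cseries_sub _ _ _ _ (Hspec w ltac:(unfold p in *; lra)) (Hspec z ltac:(unfold p in *; lra)))
        (Cseries_mulr _ _ (Csub w' z') HL)) as Ser.
    rewrite Hdd in Ser.
    set (dl := Cnorm (Csub w z)) in *.
    assert (Hb : forall n, Cnorm (Cmul (a n) (Eterm w' z' n)) <= (M * dl^2 / rho^2) * (/2)^n).
    { intro n. rewrite Cnorm_mul. pose proof (E_bound w' z' rho n ltac:(unfold w'; lra) ltac:(unfold z'; lra) ltac:(lra)) as EB.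
      rewrite Hdd in EB. fold dl in EB.
      apply Rmult_le_reg_l with (rho^2). apply pow_lt; lra.
      pose proof (Cnorm_ge0 (a n)). pose proof (Cnorm_ge0 (Eterm w' z' n)). pose proof (pos_INR n).
      assert (0 <= dl^2) by (unfold dl; pose proof (Cnorm_ge0 (Csub w z)); nra).
      assert (rho ^ 2 * (Cnorm (a n) * Cnorm (Eterm w' z' n)) <= Cnorm (a n) * (INR n * INR n * rho ^ n * dl ^ 2)).
      { replace (rho ^ 2 * (Cnorm (a n) * Cnorm (Eterm w' z' n))) with (Cnorm (a n) * (rho ^ 2 * Cnorm (Eterm w' z' n))) by ring.
        apply Rmult_le_compat_l; lra. }
      assert (Cnorm (a n) * (INR n * INR n * rho ^ n * dl ^ 2) <= M * q^n * (INR n * INR n) * dl^2).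
      { replace (Cnorm (a n) * (INR n * INR n * rho ^ n * dl ^ 2)) with (Cnorm (a n) * rho ^ n * ((INR n * INR n) * dl^2)) by ring.
        replace (M * q^n * (INR n * INR n) * dl^2) with (M * q^n * ((INR n * INR n) * dl^2)) by ring.
        apply Rmult_le_compat_r. apply Rmult_le_pos; nra. apply Hcoef. }
      assert (INR n * INR n * q^n <= (/2)^n).
      { eapply Rle_trans. apply n2_pow; lra. apply pow_incr; lra. }
      replace (rho ^ 2 * (M * dl ^ 2 / rho ^ 2 * (/ 2) ^ n)) with (M * dl^2 * (/2)^n) by (field; try apply pow_nonzero; lra).
      assert (M * q ^ n * (INR n * INR n) * dl ^ 2 <= M * dl^2 * (/2)^n).
      { replace (M * q ^ n * (INR n * INR n) * dl ^ 2) with (M * dl^2 * (INR n * INR n * q^n)) by ring.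
        apply Rmult_le_compat_l. nra. lra. }
      lra. }
    assert (S' : Cseries_cv (fun n => Cmul (a n) (Eterm w' z' n)) (Csub (Csub (phi w) (phi z)) (Cmul L (Csub w z)))).
    { refine (Cseries_ext _ _ _ _ Ser). intro n. unfold Lt, Eterm, w', z'. ceq. }
    assert (HS := Cseries_bound _ _ _ S' Hb).
    fold dl. apply Rle_trans with (2 * (M * dl ^ 2 / rho ^ 2)). exact HS.
    assert (0 <= dl) by (unfold dl; apply Cnorm_ge0).
    assert (2 * M * dl <= eps * rho^2).
    { apply Rmult_le_reg_r with (/(2*M)). apply Rinv_0_lt_compat; lra.
      replace (2 * M * dl * / (2 * M)) with dl by (field; lra). unfold Rdiv in Hwz. lra. }
    replace (2 * (M * dl ^ 2 / rho ^ 2)) with ((2*M*dl) * dl / rho^2) by (field; try apply pow_nonzero; lra).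
    apply Rmult_le_reg_r with (rho^2). apply pow_lt; lra.
    replace (2 * M * dl * dl / rho ^ 2 * rho ^ 2) with (2*M*dl*dl) by (field; try apply pow_nonzero; lra).
    nra.
  -
    intros z w Hz Hw Heq. set (z' := Csub z c0) in *. set (w' := Csub w c0) in *.
    assert (Hdd : Csub z' w' = Csub z w) by (unfold w', z'; ceq).
    pose proof (Cseries_sub _ _ _ _ (Cseries_sub _ _ _ _ (Hspec z ltac:(unfold p, z' in *; lra)) (Hspec w ltac:(unfold p, w' in *; lra)))
        (Cseries_single 1 (Cmul (a 1%nat) (Csub z' w')))) as Ser.
    set (dl := Cnorm (Csub z w)) in *.
    assert (Hdl : 0 <= dl) by (unfold dl; apply Cnorm_ge0).
    assert (Hb : forall n, Cnorm (Csub (Csub (Cmul (a n) (Cpow z' n)) (Cmul (a n) (Cpow w' n)))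
                  (if Nat.eqb n 1 then Cmul (a 1%nat) (Csub z' w') else (0,0)))
               <= (16 * M * q^2 * dl / rho) * (/2)^n).
    { assert (0 <= 16 * M * q^2 * dl / rho).
      { apply Rmult_le_pos; [|apply Rlt_le, Rinv_0_lt_compat; lra]. assert (0 <= q^2) by nra. 
        apply Rmult_le_pos; [|lra]. nra. }
      assert (0 <= (/2)^3) by (apply pow_le; lra).
      intros [|[|m]].
      - simpl. replace (Csub (Csub (Cmul (a 0%nat) (1, 0)) (Cmul (a 0%nat) (1, 0))) (0, 0)) with ((0,0):Cx) by ceq.
        rewrite Cnorm_zero. nra.
      - simpl. replace (Csub (Csub (Cmul (a 1%nat) (Cmul z' (1, 0))) (Cmul (a 1%nat) (Cmul w' (1, 0))))
           (Cmul (a 1%nat) (Csub z' w'))) with ((0,0):Cx) by ceq.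
        rewrite Cnorm_zero. nra.
      - set (n := S (S m)). cbv beta.
        replace (if Nat.eqb n 1 then Cmul (a 1%nat) (Csub z' w') else (0,0)) with ((0,0):Cx) by reflexivity.
        replace (Csub (Csub (Cmul (a n) (Cpow z' n)) (Cmul (a n) (Cpow w' n))) (0, 0))
          with (Cmul (a n) (Csub (Cpow z' n) (Cpow w' n))) by ceq.
        rewrite Cnorm_mul.
        pose proof (D_bound z' w' rho n ltac:(lra) ltac:(lra) ltac:(lra)) as DB.
        rewrite Hdd in DB. fold dl in DB.
        apply Rmult_le_reg_l with rho; [lra|].
        pose proof (Cnorm_ge0 (a n)). pose proof (Cnorm_ge0 (Csub (Cpow z' n) (Cpow w' n))). pose proof (pos_INR n).
        assert (rho * (Cnorm (a n) * Cnorm (Csub (Cpow z' n) (Cpow w' n))) <= Cnorm (a n) * rho^n * (INR n * dl)).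
        { replace (rho * (Cnorm (a n) * Cnorm (Csub (Cpow z' n) (Cpow w' n)))) with (Cnorm (a n) * (rho * Cnorm (Csub (Cpow z' n) (Cpow w' n)))) by ring.
          replace (Cnorm (a n) * rho^n * (INR n * dl)) with (Cnorm (a n) * (INR n * rho^n * dl)) by ring.
          apply Rmult_le_compat_l; lra. }
        assert (Cnorm (a n) * rho^n * (INR n * dl) <= M * q^n * (INR n * dl)).
        { apply Rmult_le_compat_r. nra. apply Hcoef. }
        assert (INR n * q^n <= 2^2 * (2*q)^2 * (/2)^n).
        { eapply Rle_trans. apply n_pow; lra. apply pow_split. lra. unfold n; lia. }
        replace (rho * (16 * M * q ^ 2 * dl / rho * (/ 2) ^ n)) with (M * dl * (2^2 * (2*q)^2 * (/2)^n)) by (field; lra).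
        assert (M * q ^ n * (INR n * dl) <= M * dl * (2^2 * (2*q)^2 * (/2)^n)).
        { replace (M * q ^ n * (INR n * dl)) with (M * dl * (INR n * q^n)) by ring.
          apply Rmult_le_compat_l; nra. }
        lra. }
    pose proof (Cseries_bound _ _ _ Ser Hb) as HS.
    rewrite Heq in HS.
    replace (Csub (Csub (phi w) (phi w)) (Cmul (a 1%nat) (Csub z' w'))) with (Copp (Cmul (a 1%nat) (Csub z' w'))) in HS by ceq.
    rewrite Cnorm_opp, Cnorm_mul, Hdd in HS. fold A1 dl in HS.
    assert (Hk : 2 * (16 * M * q ^ 2 * dl / rho) <= A1 / 2 * dl).
    { replace (2 * (16 * M * q ^ 2 * dl / rho)) with ((32 * M * q / p) * dl) by (rewrite Hrq; field; lra).
      apply Rmult_le_compat_r; [lra|].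
      unfold q. apply Rmult_le_reg_r with (p * p / (32*M)). apply Rdiv_lt_0_compat; nra.
      replace (32 * M * (rho / p) / p * (p * p / (32 * M))) with rho by (field; lra).
      replace (A1 / 2 * (p * p / (32 * M))) with (A1 * p^2 / (64*M)) by (field; lra). lra. }
    assert (dl = 0) by nra.
    apply Cnorm_eq0 in H. replace z with (Cadd (Csub z w) w) by ceq. rewrite H. ceq.
  - exact Hspec.
Qed.

Theorem lemma5p5 (gamma : R -> Cx) (t0 : R) :
  jordan_arc gamma -> 0 < t0 < 1 ->
  (forall (a b : R) (f : R -> Cx), 0 <= a -> a < t0 -> t0 < b -> b <= 1 ->
     (cond1 a b t0 f <-> cond2 gamma a b t0 f)) ->
  exists (d : R) (V : Cx -> Prop) (phi : Cx -> Cx),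
    d > 0 /\ (forall t, t0 - d < t < t0 + d -> 0 <= t <= 1) /\
    Copen V /\ (forall t, t0 - d < t < t0 + d -> V (RtoC t)) /\
    holomorphic_on V phi /\ injective_on V phi /\
    (forall t, t0 - d < t < t0 + d -> phi (RtoC t) = gamma t).
Proof.
  intros _ Ht Heq.
  set (m := Rmin t0 (1 - t0)).
  assert (Hm : 0 < m /\ m <= t0 /\ m <= 1 - t0).
  { unfold m. split. apply Rmin_glb_lt; lra. split. apply Rmin_l. apply Rmin_r. }
  assert (C1 : cond1 0 1 t0 gamma).
  { apply (Heq 0 1 gamma); try lra.
    exists (c2 (gamma t0) (1,0)), m, m. split; [lra|]. split; [apply c2_radius|]. split; [lra|].
    split; [intros; lra|]. intros t _.
    pose proof (c2_cv (gamma t0) (1,0) (Csub (gamma t) (gamma t0))) as H.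
    replace (Cadd (gamma t0) (Cmul (1,0) (Csub (gamma t) (gamma t0)))) with (gamma t) in H by ceq. exact H. }
  destruct C1 as [a [r [d [Hr [Ha [Hd [Hdi Hga]]]]]]].
  assert (C2 : cond2 gamma 0 1 t0 RtoC).
  { apply (Heq 0 1 RtoC); try lra.
    exists (c2 (RtoC t0) (1,0)), m, m. split; [lra|]. split; [apply c2_radius|]. split; [lra|].
    split; [intros; lra|]. intros t _.
    pose proof (c2_cv (RtoC t0) (1,0) (RtoC (t - t0))) as H.
    replace (Cadd (RtoC t0) (Cmul (1,0) (RtoC (t - t0)))) with (RtoC t) in H by ceq. exact H. }
  destruct C2 as [b [s [e [Hs [Hb [He [Hei Hgb]]]]]]].
  pose proof (a1_nonzero gamma t0 a r d b s e Hr Ha ltac:(lra) Hga Hs Hb ltac:(lra) Hgb) as HA1.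
  destruct (analytic_ext a r (RtoC t0) Hr Ha HA1) as [rho [phi [Hrho [Hrr [Hop [Hho [Hin Hsp]]]]]]].
  exists (Rmin d rho), (fun z => Cnorm (Csub z (RtoC t0)) < rho), phi.
  assert (Hm1 : Rmin d rho <= d) by apply Rmin_l.
  assert (Hm2 : Rmin d rho <= rho) by apply Rmin_r.
  assert (HV : forall t, t0 - Rmin d rho < t < t0 + Rmin d rho -> Cnorm (Csub (RtoC t) (RtoC t0)) < rho).
  { intros t Htt. replace (Csub (RtoC t) (RtoC t0)) with (RtoC (t - t0)) by ceq.
    rewrite Cnorm_RtoC. apply Rabs_def1; lra. }
  split. apply Rmin_glb_lt; lra.
  split. { intros t Htt. specialize (Hdi t ltac:(lra)). lra. }
  split. exact Hop.
  split. exact HV.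
  split. exact Hho. split. exact Hin.
  intros t Htt. apply (Cseries_unique (fun n => Cmul (a n) (Cpow (Csub (RtoC t) (RtoC t0)) n))).
  apply Hsp. specialize (HV t Htt). lra.
  replace (Csub (RtoC t) (RtoC t0)) with (RtoC (t - t0)) by ceq.
  apply Hga. lra.
Qed.
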